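(* Let $\eta$ be a nonnegative integer valued random variable with $P(\eta=0)<1$ and let $(p_n)$ be a sequence in $(0,1]$ with $\lim_{n\to\infty}p_n=1$. Consider the auxiliary process on the complete graph $\mathcal{K}_{n+1}$ with survival parameter $p_n$, in which the $\eta_v$ are i.i.d. with the distribution of $\eta$. Then for every $c\in(0,1)$, \[\lim_{n\to\infty}P\big(R(\mathcal{K}_{n+1},p_n)<k_1\big)=0,\qquad\text{where }k_1=k_1(n)=\lfloor cn\rfloor-1.\]
   Context: Auxiliary process on a connected graph $\mathcal{G}=(\mathcal{V},\mathcal{E})$ (here the complete graph $\mathcal{K}_{n+1}$ on $n+1$ vertices, in which a step goes to a uniformly chosen vertex other than the current one) with root $o$ and survival parameter $p$: each $v\neq o$ initially carries $\eta_v$ inactive particles and $o$ carries $1+\eta_o$ active particles (the original particles). At each round $k=1,2,\dots$ exactly one active particle is chosen (by an arbitrary rule) to participate; independently of everything else it survives with probability $p$, in which case it moves to a uniformly chosen neighbouring vertex and activates all inactive particles there, and otherwise it dies and is removed. When the last living original active particle dies, all remaining inactive particles are called extra and a new extra active particle is injected at $o$; afterwards, each time the only living active particle dies, a new extra active particle is injected at $o$. For round $k$ define $X_k=0$ if the participating particle dies; $X_k=1$ if it survives and moves to a previously visited vertex or to a never-visited vertex $v$ with $\eta_v=0$; $X_k=j\geq2$ if it survives and moves to a never-visited vertex $v$ with $\eta_v=j-1$. Set $A'_0=1+\eta_o$, $A'_k=1+\eta_o+\sum_{j=1}^k(X_j-1)$, and $R=R(\mathcal{G},p)=\inf\{k:A'_k=0\}$.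 *)

(* Defs.v *)
From HB Require Import structures.
From mathcomp Require Import all_boot all_order all_algebra.
From mathcomp Require Import all_classical all_reals all_analysis.
Set Implicit Arguments. Unset Strict Implicit. Unset Printing Implicit Defensive.
Import Order.TTheory GRing.Theory Num.Theory.
Import numFieldNormedType.Exports.
Local Open Scope ring_scope.

(* Vertices are 'I_n.+1, the root o is ord0.  A configuration records the
   number of ACTIVE particles at each vertex and the set of visited vertices.
   (On a visited vertex all inactive particles have been activated, so no
   inactive particle remains there; the inactive particles of a never-visited
   vertex v are the eta_v, revealed (sampled from the law of eta,
   independently) when v is first visited.) *)
Section AuxProcess.
Variables (R : realType) (n : nat).
Variable (p : R).
Variable (q : nat -> R).     (* law of eta: q j = P(eta = j) *)

Definition config := ({ffun 'I_n.+1 -> nat} * {set 'I_n.+1})%type.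

(* An arbitrary (history dependent, deterministic) rule: given the history of
   configurations (ending with the current one), it proposes a vertex whose
   active particle participates. *)
Definition rule := seq config -> 'I_n.+1.

Definition nactive (s : config) : nat := (\sum_(v < n.+1) s.1 v)%N.

Definition chosen (r : rule) (hist : seq config) (s : config) : 'I_n.+1 :=
  let v := r (rcons hist s) in
  if (0 < s.1 v)%N then v else odflt ord0 [pick u | (0 < s.1 u)%N].

Definition addat (a : {ffun 'I_n.+1 -> nat}) (w : 'I_n.+1) (k : nat) :=
  [ffun u => if u == w then (a u + k)%N else a u].
Definition remat (a : {ffun 'I_n.+1 -> nat}) (v : 'I_n.+1) :=
  [ffun u => if u == v then (a u).-1 else a u].

(* hitprob r t hist s = probability that, starting from configuration s
   (with past history hist), the number of active particles is 0 at one of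
   the current or next t-1 times, i.e. A'_m = 0 for some of the t times
   m, m+1, ..., m+t-1.  One round: the chosen particle dies w.p. 1-p; else
   it moves to a uniform neighbour w (one of the n vertices w <> v); if w
   was never visited, its eta_w = j inactive particles (law q) are activated. *)
Fixpoint hitprob (r : rule) (t : nat) (hist : seq config) (s : config) : R :=
  match t with
  | 0 => 0
  | t'.+1 =>
    if nactive s == 0%N then 1 else
    let v := chosen r hist s in
    let hist' := rcons hist s in
    let a := remat s.1 v in
    (1 - p) * hitprob r t' hist' (a, s.2)
    + p * \sum_(w < n.+1 | w != v) n%:R^-1 *
        (if w \in s.2 then hitprob r t' hist' (addat a w 1, s.2)
         else limn (series (fun j => q j * hitprob r t' hist' (addat a w j.+1, w |: s.2))))
  end.

(* initial configuration when eta_o = j: 1 + j active particles at the root *)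
Definition init_config (j : nat) : config :=
  ([ffun u => if u == ord0 then j.+1 else 0%N], [set ord0]).

(* P(R < k), where R = inf {k : A'_k = 0} *)
Definition prob_R_lt (r : rule) (k : nat) : R :=
  limn (series (fun j => q j * hitprob r k [::] (init_config j))).

End AuxProcess.

(* k_1(n) = floor(c n) - 1  (truncated at 0; for k <= 0, P(R < k) = 0 anyway) *)
Definition k1 (R : realType) (c : R) (n : nat) : nat :=
  (Num.truncn (c * n%:R)).-1.

(* Main.v *)
Require Import Defs.
From HB Require Import structures.
From mathcomp Require Import all_boot all_order all_algebra.
From mathcomp Require Import all_classical all_reals all_analysis.
From mathcomp Require Import ring lra zify.
Import Order.TTheory GRing.Theory Num.Theory.
Import numFieldNormedType.Exports.
Local Open Scope classical_set_scope.
Local Open Scope ring_scope.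
Set Implicit Arguments. Unset Strict Implicit. Unset Printing Implicit Defensive.

Section Ser.
Variable R : realType.

Lemma ser_nd (u : nat -> R) : (forall j, 0 <= u j) -> nondecreasing_seq (series u).
Proof.
move=> h; have := @nondecreasing_series R u xpredT 0%N.
by apply => n _.
Qed.

Lemma ser_le_lim (u : nat -> R) l : (forall j, 0 <= u j) -> series u @ \oo --> l ->
  forall N, series u N <= l.
Proof.
move=> h cu N; have -> : l = limn (series u) by apply/esym/cvg_lim.
apply: nondecreasing_cvgn_le; [exact: ser_nd| by apply/cvg_ex; exists l].
Qed.

Lemma ser_cvg (u : nat -> R) B : (forall j, 0 <= u j) -> (forall N, series u N <= B) ->
  cvgn (series u).
Proof.
move=> h hB; apply: nondecreasing_is_cvgn; first exact: ser_nd.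
by exists B => _ [N _ <-].
Qed.

Lemma ser_lim_bnd (u : nat -> R) B : (forall j, 0 <= u j) -> (forall N, series u N <= B) ->
  0 <= limn (series u) <= B.
Proof.
move=> h hB; have cu := ser_cvg h hB; apply/andP; split.
  apply: limr_ge => //; near=> N; rewrite /series /=; apply: sumr_ge0 => i _; exact: h.
by apply: limr_le => //; near=> N; exact: hB.
Unshelve. all: by end_near. Qed.

End Ser.

Section H.
Variables (R : realType) (n : nat).

Lemma sum_neq (v : 'I_n.+1) (F : 'I_n.+1 -> R) :
  \sum_(w < n.+1 | w != v) F w = \sum_(w < n.+1) F w - F v.
Proof. rewrite [in RHS](bigD1 v) //=. by rewrite addrC addrK. Qed.

Lemma sum_neq_const (v : 'I_n.+1) (c : R) :
  \sum_(w < n.+1 | w != v) c = c * n%:R.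
Proof. by rewrite sum_neq sumr_const card_ord mulrSr addrK mulr_natr. Qed.

Lemma sumf_remat (a : {ffun 'I_n.+1 -> nat}) v : (0 < a v)%N ->
  (\sum_(u < n.+1) remat a v u = (\sum_(u < n.+1) a u).-1)%N.
Proof.
move=> av; rewrite (bigD1 v) //= [in RHS](bigD1 v) //= ffunE eqxx.
rewrite (eq_bigr a); last by move=> i /negbTE ne; rewrite ffunE ne.
by case: (a v) av.
Qed.

Lemma sumf_addat (a : {ffun 'I_n.+1 -> nat}) w k :
  (\sum_(u < n.+1) addat a w k u = (\sum_(u < n.+1) a u) + k)%N.
Proof.
rewrite (bigD1 w) //= [in RHS](bigD1 w) //= ffunE eqxx.
rewrite (eq_bigr a); last by move=> i /negbTE ne; rewrite ffunE ne.
by rewrite addnAC.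
Qed.

Lemma chosen_pos (r : rule n) hist (s : config n) : nactive s != 0%N ->
  (0 < s.1 (chosen r hist s))%N.
Proof.
move=> ns; rewrite /chosen; case: ifP => // _.
case: pickP => [u //|none]; exfalso; move: ns; rewrite /nactive big1 //.
by move=> i _; have := none i; rewrite lt0n => /negbFE/eqP.
Qed.

End H.

Section HP.
Variables (R : realType) (n : nat) (p : R) (q : nat -> R) (r : rule n).

Lemma hit01 : 0 <= p <= 1 -> (forall j, 0 <= q j) -> (forall N, series q N <= 1) ->
  forall t hist s, 0 <= hitprob p q r t hist s <= 1.
Proof.
move=> /andP[p0 p1] q0 qs; elim=> [|t IH] hist s /=; first by rewrite lexx ler01.
case: ifP => [_|ns]; first by rewrite ler01 lexx.
set v := chosen r hist s.
set B := \sum_(w < n.+1 | w != v) _.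
have hb : forall w : 'I_n.+1, 0 <= (if w \in s.2 then hitprob p q r t (rcons hist s) (addat (remat s.1 v) w 1, s.2)
         else limn (series (fun j => q j * hitprob p q r t (rcons hist s) (addat (remat s.1 v) w j.+1, w |: s.2)))) <= 1.
  move=> w; case: ifP => _; first exact: IH.
  apply: ser_lim_bnd => [j|N].
    by have /andP[h0 _] := IH (rcons hist s) (addat (remat s.1 v) w j.+1, w |: s.2); apply: mulr_ge0.
  apply: le_trans (qs N); apply: ler_sum => j _.
  have /andP[h0 h1] := IH (rcons hist s) (addat (remat s.1 v) w j.+1, w |: s.2).
  have := q0 j; nra.
have hB : 0 <= B <= 1.
  apply/andP; split.
    apply: sumr_ge0 => w _; have /andP[h0 _] := hb w; by apply: mulr_ge0.
  apply: (@le_trans _ _ (\sum_(w < n.+1 | w != v) n%:R^-1)).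
    apply: ler_sum => w _; have /andP[_ h1] := hb w.
    have ni : 0 <= n%:R^-1 :> R by rewrite invr_ge0.
    by rewrite -[leRHS]mulr1 ler_wpM2l.
  rewrite sum_neq_const; case: n {v B hb} => [|m]; first by rewrite mulr0 ler01.
  by rewrite mulVf.
have /andP[h0 h1] := IH (rcons hist s) (remat s.1 v, s.2).
move/andP: hB => [b0 b1].
apply/andP; split; nra.
Qed.

Lemma Gbound (x : R) (a : nat) (u : nat -> R) : 0 <= x <= 1 ->
  (forall j, 0 <= q j) -> (forall N, series q N <= 1) ->
  (forall j, 0 <= u j <= q j * x ^+ (a + j)) ->
  limn (series u) <= x ^+ a * (1 - (1 - x) * (1 - q 0%N)).
Proof.
move=> /andP[x0 x1] q0 qs hu.
have q01 : q 0%N <= 1 by have := qs 1%N; rewrite /series /= big_nat1.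
have hc : forall N, series (fun j => q j * (if j == 0%N then 1 else x)) N <= 1 - (1 - x) * (1 - q 0%N).
  case=> [|N]; first by rewrite /series /= big_geq //; have := q0 0%N; nra.
  have := qs N.+1; rewrite /series /= !big_nat_recl //= mulr1.
  rewrite -big_distrl /=; set T := \sum_(0 <= i < N) q i.+1 => hT.
  have T0 : 0 <= T by apply: sumr_ge0 => i _.
  nra.
have xa0 : 0 <= x ^+ a by apply: exprn_ge0.
suff hN : forall N, series u N <= x ^+ a * (1 - (1 - x) * (1 - q 0%N)).
  have := @ser_lim_bnd _ u _ (fun j => proj1 (andP (hu j))) hN; by case/andP.
move=> N; apply: le_trans (ler_wpM2l xa0 (hc N)).
rewrite /series /= big_distrr /=; apply: ler_sum => j _.
have /andP[_ h] := hu j; apply: le_trans h _.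
rewrite exprD mulrCA ler_wpM2l // ler_wpM2l //.
case: j => [|j]; first by rewrite expr0.
by rewrite exprS -[leRHS]mulr1 ler_wpM2l // exprn_ile1.
Qed.


Lemma hitbound (x : R) (M : nat) : 0 <= p <= 1 -> 0 <= x <= 1 ->
  (forall j, 0 <= q j) -> (forall N, series q N <= 1) -> (0 < n)%N ->
  (forall m, (m < M)%N -> 1 - p <= p * ((n%:R - m%:R) / n%:R * ((1 - x) * (1 - q 0%N))) * x) ->
  forall t hist (s : config n), (#|s.2| + t <= M)%N -> hitprob p q r t hist s <= x ^+ nactive s.
Proof.
move=> hp /andP[x0 x1] q0 qs n0 HC.
have h01 := hit01 hp q0 qs.
move: hp => /andP[p0 p1].
elim=> [|t IH] hist s hM /=; first by apply: exprn_ge0.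
case: ifP => [/eqP ->|ns]; first by rewrite expr0.
set v := chosen r hist s.
set S := s.2.
set D := (1 - x) * (1 - q 0%N).
have vpos : (0 < s.1 v)%N by apply: chosen_pos; rewrite ns.
have nrem : nactive (remat s.1 v, S) = (nactive s).-1 by rewrite /nactive /= sumf_remat.
have apos : (0 < nactive s)%N by rewrite lt0n ns.
set a := nactive s in nrem apos *.
set y := x ^+ a.-1.
have y0 : 0 <= y by apply: exprn_ge0.
have xa : x ^+ a = x * y by rewrite /y -exprS prednK.
set f := fun w : 'I_n.+1 => if w \in S then 1 else 1 - D.
have hb : forall w : 'I_n.+1, (if w \in S then hitprob p q r t (rcons hist s) (addat (remat s.1 v) w 1, S)
         else limn (series (fun j => q j * hitprob p q r t (rcons hist s) (addat (remat s.1 v) w j.+1, w |: S))))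
         <= x ^+ a * f w.
  move=> w; rewrite /f; case: ifP => wS.
    rewrite mulr1; apply: le_trans (IH _ _ _) _; first by move: hM; rewrite /= -/S; lia.
    by rewrite /nactive /= sumf_addat -/(nactive (remat s.1 v, S)) nrem addn1 prednK.
  apply: Gbound => //; first by rewrite x0.
  move=> j; have /andP[h0 h1] := h01 t (rcons hist s) (addat (remat s.1 v) w j.+1, w |: S).
  apply/andP; split; first by apply: mulr_ge0.
  apply: ler_wpM2l => //; apply: le_trans (IH _ _ _) _.
    move: hM; rewrite /= cardsU1 wS /= -/S; lia.
  rewrite /nactive /= sumf_addat -/(nactive (remat s.1 v, S)) nrem.
  by rewrite addnS -addSn prednK.
have q01 : q 0%N <= 1 by have := qs 1%N; rewrite /series /= big_nat1.
have D0 : 0 <= D by rewrite /D; apply: mulr_ge0; rewrite subr_ge0.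
have h0 : hitprob p q r t (rcons hist s) (remat s.1 v, S) <= y.
  rewrite /y -nrem; apply: IH; move: hM; rewrite /= -/S; lia.
set B := \sum_(w < n.+1 | w != v) _.
have ni : 0 <= n%:R^-1 :> R by rewrite invr_ge0.
have hB : B <= x ^+ a * (n%:R^-1 * \sum_(w < n.+1 | w != v) f w).
  rewrite mulrA big_distrr /=; apply: ler_sum => w _.
  rewrite [_ * n%:R^-1]mulrC -mulrA; apply: ler_wpM2l => //; exact: hb w.
have hS : (#|S| + #|~: S| = n.+1)%N by rewrite cardsC card_ord.
have sfull : \sum_(w < n.+1) f w = #|S|%:R + (1 - D) * #|~: S|%:R.
  rewrite (bigID (fun w => w \in S)) /=; congr (_ + _).
    rewrite (eq_bigr (fun _ => 1)); last by move=> i; rewrite /f => ->.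
    by rewrite sumr_const.
  rewrite (eq_bigr (fun _ => 1 - D)); last by move=> i; rewrite /f => /negbTE ->.
  rewrite (eq_bigl (fun w => w \in ~: S)); last by move=> i; rewrite !inE.
  by rewrite sumr_const mulr_natr.
have fv : 1 - D <= f v by rewrite /f; case: ifP => _; lra.
have hSR : #|S|%:R + #|~: S|%:R = n%:R + 1 :> R.
  by rewrite -natrD hS -addn1 natrD.
have sf : \sum_(w < n.+1 | w != v) f w <= n%:R - D * (n%:R - #|S|%:R).
  have cS : #|~: S|%:R = n%:R + 1 - #|S|%:R :> R by lra.
  rewrite sum_neq sfull cS; lra.
have nR : n%:R != 0 :> R by rewrite pnatr_eq0 -lt0n.
have hK : n%:R^-1 * (n%:R - D * (n%:R - #|S|%:R)) = 1 - (n%:R - #|S|%:R) / n%:R * D.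
  by field.
have HCm := HC #|S| ltac:(by rewrite (leq_trans _ hM) // addnS ltnS leq_addr).
have xa0 : 0 <= x ^+ a by apply: exprn_ge0.
have hB2 : B <= x ^+ a * (1 - (n%:R - #|S|%:R) / n%:R * D).
  by rewrite -hK; apply: le_trans hB _; apply: ler_wpM2l => //; apply: ler_wpM2l.
rewrite xa in hB2 *.
set K := (n%:R - #|S|%:R) / n%:R * D in HCm hB2 *.
have key : (1 - p) * y <= p * K * x * y by apply: ler_wpM2r.
have e1 : (1 - p) * hitprob p q r t (rcons hist s) (remat s.1 v, S) <= (1 - p) * y.
  by apply: ler_wpM2l; rewrite ?subr_ge0.
have e2 : p * B <= p * (x * y * (1 - K)) by apply: ler_wpM2l.
have e3 : p * x * y <= x * y by rewrite -mulrA ler_piMl // mulr_ge0.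
lra.
Qed.

End HP.

Lemma nactive_init n j : nactive (init_config n j) = j.+1.
Proof.
rewrite /nactive /init_config /= (bigD1 ord0) //= ffunE eqxx big1 ?addn0 //.
by move=> i /negbTE ne; rewrite ffunE ne.
Qed.

Unset Implicit Arguments.

Theorem lemma2p4 (R : realType) (q : nat -> R) (p : nat -> R) (c : R)
  (r : forall n : nat, rule n)
  (hq0 : forall j, 0 <= q j) (hq1 : series q @ \oo --> (1:R)) (hq0lt1 : q 0%N < 1)
  (hp : forall n, 0 < p n <= 1) (hp1 : p @ \oo --> (1:R))
  (hc : 0 < c < 1) :
  (fun n => prob_R_lt (p n) q (r n) (k1 c n)) @ \oo --> (0:R).
Proof.
have qs : forall N, series q N <= 1 by apply: ser_le_lim.
move/andP: hc => [c0 c1].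
apply/cvgr0Pnorm_le => e e0.
set x := Num.min e (1/2).
have x0 : 0 < x by rewrite /x lt_min e0 /=; lra.
have xe : x <= e by rewrite /x ge_min lexx.
have x2 : x <= 1/2 by rewrite /x ge_min lexx orbT.
set D := (1 - x) * (1 - q 0%N).
have D0 : 0 < D by rewrite /D; apply: mulr_gt0; lra.
set d := Num.min ((1/2) * (1 - c) * D * x) (1/2).
have d0 : 0 < d by rewrite /d lt_min; apply/andP; split; [apply: mulr_gt0 => //; apply: mulr_gt0 => //; apply: mulr_gt0 => //; lra | lra].
have d1 : d <= (1/2) * (1 - c) * D * x by rewrite /d ge_min lexx.
have d2 : d <= 1/2 by rewrite /d ge_min lexx orbT.
have Hp := (cvgrPdist_le _ _).1 hp1 d d0.
near=> n.
have hpn : `|1 - p n| <= d by near: n; exact: Hp.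
have n0 : (0 < n)%N by near: n; exact: nbhs_infty_gt.
have /andP[pn0 pn1] := hp n.
have p1n : 1 - p n <= d by rewrite ger0_norm ?subr_ge0 // in hpn.
set M := (k1 c n).+1.
have HC : forall m, (m < M)%N -> 1 - p n <= p n * ((n%:R - m%:R) / n%:R * ((1 - x) * (1 - q 0%N))) * x.
  move=> m mM.
  have mle : m%:R <= c * n%:R.
    have hcn : 0 <= c * n%:R by apply: mulr_ge0 => //; lra.
    apply: le_trans (_ : (Num.truncn (c * n%:R))%:R <= _); last by rewrite truncn_le.
    rewrite ler_nat.
    move: mM; rewrite /M /k1 ltnS => /leq_trans; apply; exact: leq_pred.
  have nR : 0 < n%:R :> R by rewrite ltr0n.
  have hf : 1 - c <= (n%:R - m%:R) / n%:R by rewrite ler_pdivlMr //; lra.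
  have A : (1/2) * (1 - c) <= p n * ((n%:R - m%:R) / n%:R) by apply: ler_pM; lra.
  have B : (1/2) * (1 - c) * D <= p n * ((n%:R - m%:R) / n%:R) * D by apply: ler_wpM2r => //; lra.
  have C : (1/2) * (1 - c) * D * x <= p n * ((n%:R - m%:R) / n%:R) * D * x by apply: ler_wpM2r => //; lra.
  rewrite -/D; lra.
have hb : forall j, hitprob (p n) q (r n) (k1 c n) [::] (init_config n j) <= x.
  have hpn2 : 0 <= p n <= 1 by rewrite pn1 ltW.
  have hx : 0 <= x <= 1 by rewrite ltW //= (le_trans x2) //; lra.
  move=> j; apply: le_trans (@hitbound _ _ (p n) q (r n) x M hpn2 hx hq0 qs n0 HC (k1 c n) [::] (init_config n j) _) _.
    by rewrite /init_config /= cards1.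
  rewrite nactive_init exprS -[leRHS]mulr1; apply: ler_wpM2l; [exact: ltW | apply: exprn_ile1; lra].
have h01 := hit01 (r n) (p:=p n) ltac:(by rewrite ltW) hq0 qs.
have : 0 <= limn (series (fun j => q j * hitprob (p n) q (r n) (k1 c n) [::] (init_config n j))) <= x.
  apply: ser_lim_bnd => [j|N].
    by apply: mulr_ge0 => //; case/andP: (h01 (k1 c n) [::] (init_config n j)).
  apply: (@le_trans _ _ (x * series q N)); last by rewrite -[leRHS]mulr1; apply: ler_wpM2l; [exact: ltW | exact: qs].
  rewrite /series /= big_distrr /=; apply: ler_sum => j _.
  rewrite mulrC; apply: ler_wpM2r => //; exact: hb.
rewrite /prob_R_lt => /andP[l0 l1]; rewrite ger0_norm //; lra.
Unshelve. all: by end_near.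
Qed.
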